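(* Let $k\ge 2$ and let $\lambda$ be an integer partition of length $k$ whose parts are not all equal. Then $|\lambda^{\perp B}|$ is at most the sum of the four largest of the binomial coefficients $\binom{k-2}{0},\binom{k-2}{1},\dots,\binom{k-2}{k-2}$ (the sum of all of them if there are fewer than four). Consequently: (a) if $k\ge 2$ is even, then $|(1^k)^{\perp B}|>|\mu^{\perp B}|$ for every partition $\mu$ of length $k$ whose parts are not all equal; (b) if $k\ge 5$ is odd, then $|(2,1^{k-1})^{\perp B}|\ge|\mu^{\perp B}|$ for every partition $\mu$ of length $k$.
   Context: An integer partition is $\lambda=(\lambda_1,\dots,\lambda_k)$ with integers $\lambda_1\ge\dots\ge\lambda_k\ge 1$; $k$ is its length. $1^k$ denotes the partition with $k$ parts equal to $1$, and $(2,1^{k-1})$ the partition with one part $2$ and $k-1$ parts $1$. For a partition $\lambda$, $\lambda^{\perp B}=\{x\in\{-1,1\}^k:\lambda_1x_1+\dots+\lambda_kx_k=0\}$. *)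

(* Defs.v *)
From HB Require Import structures.
From mathcomp Require Import all_boot all_order all_algebra.
Set Implicit Arguments. Unset Strict Implicit. Unset Printing Implicit Defensive.
Import Order.TTheory GRing.Theory Num.Theory.

Definition is_partition (l : seq nat) : bool :=
  sorted geq l && all (fun x => 0 < x) l.

Definition sgnb (b : bool) : int := if b then 1%R else (-1)%R.

(* lambda^{perp B} = { x in {-1,1}^k : sum_i l_i x_i = 0 }, with x encoded
   as a boolean finite function on 'I_k (k = size l) via sgnb. *)
Definition perpB (l : seq nat) : {set {ffun 'I_(size l) -> bool}} :=
  [set x : {ffun 'I_(size l) -> bool} |
     (\sum_(i < size l) ((nth 0%N l i)%:Z * sgnb (x i)))%R == 0%R].

Definition top4_binom_sum (n : nat) : nat :=
  \sum_(c <- take 4 (sort geq [seq 'C(n, j) | j <- iota 0 n.+1])) c.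

(* Main.v *)
Require Import Defs.
From HB Require Import structures.
From mathcomp Require Import all_boot all_order all_algebra zify.
Set Implicit Arguments. Unset Strict Implicit. Unset Printing Implicit Defensive.
Import Order.TTheory GRing.Theory Num.Theory.

Fixpoint cnt (w : seq nat) (t : int) : nat :=
  match w with
  | [::] => (t == 0%R) : nat
  | a :: w' => cnt w' (t - a%:Z)%R + cnt w' (t + a%:Z)%R
  end.

Definition fcons n (b : bool) (y : {ffun 'I_n -> bool}) : {ffun 'I_n.+1 -> bool} :=
  [ffun i => if unlift ord0 i is Some j then y j else b].

Definition fsplit n (x : {ffun 'I_n.+1 -> bool}) : bool * {ffun 'I_n -> bool} :=
  (x ord0, [ffun j => x (lift ord0 j)]).

Lemma fconsK n : cancel (fun p : bool * {ffun 'I_n -> bool} => fcons p.1 p.2) (@fsplit n).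
Proof.
case=> b y; rewrite /fsplit /fcons /= ffunE unlift_none; congr (_, _).
by apply/ffunP=> j; rewrite !ffunE liftK.
Qed.

Lemma fsplitK n : cancel (@fsplit n) (fun p : bool * {ffun 'I_n -> bool} => fcons p.1 p.2).
Proof.
move=> x; apply/ffunP=> i; rewrite /fsplit /fcons /= ffunE.
by case: unliftP => [j ->|->]; rewrite ?ffunE.
Qed.

Lemma card_perp w t :
  #|[set x : {ffun 'I_(size w) -> bool} |
     (\sum_(i < size w) ((nth 0%N w i)%:Z * sgnb (x i)))%R == t]| = cnt w t.
Proof.
elim: w t => [|a w IH] t.
  rewrite /= -sum1dep_card.
  under eq_bigl => x do rewrite big_ord0 eq_sym.
  case: (t == 0%R) => /=; last by rewrite big_pred0.
  by rewrite sum1_card card_ffun card_ord.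
rewrite -sum1dep_card big_mkcond /=.
rewrite (reindex (fun p : bool * {ffun 'I_(size w) -> bool} => fcons p.1 p.2)) /=; last first.
  by exists (@fsplit _) => x _; [apply: fconsK | apply: fsplitK].
rewrite -(pair_bigA _ (fun b y => if (\sum_(i < (size w).+1) (nth 0%N (a :: w) i)%:Z * sgnb (fcons b y i))%R == t then 1 else 0)%N) /=.
rewrite big_bool /= -!IH -!sum1dep_card.
rewrite [X in (_ = X + _)%N]big_mkcond [X in (_ = _ + X)%N]big_mkcond.
congr (_ + _)%N; apply: eq_bigr => y _; rewrite big_ord_recl /fcons !ffunE unlift_none /=;
  under eq_bigr => i _ do rewrite ffunE liftK;
  rewrite /sgnb ?mulr1 ?mulrN1.
- by under eq_bigr do rewrite add0n; congr (if _ then _ else _); apply/eqP/eqP => H; lia.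
- by under eq_bigr do rewrite add0n; congr (if _ then _ else _); apply/eqP/eqP => H; lia.
Qed.

Lemma cnt_rcons w b t : cnt (rcons w b) t = cnt w (t - b%:Z)%R + cnt w (t + b%:Z)%R.
Proof.
elim: w t => [|a w IH] t //=.
rewrite !IH.
have -> : (t - a%:Z - b%:Z = t - b%:Z - a%:Z)%R by lia.
have -> : (t - a%:Z + b%:Z = t + b%:Z - a%:Z)%R by lia.
have -> : (t + a%:Z - b%:Z = t - b%:Z + a%:Z)%R by lia.
have -> : (t + a%:Z + b%:Z = t + b%:Z + a%:Z)%R by lia.
by rewrite addnACA.
Qed.

Lemma cnt_sym w t : cnt w (- t)%R = cnt w t.
Proof.
elim: w t => [|a w IH] t /=; first by rewrite oppr_eq0.
have -> : (- t - a%:Z = - (t + a%:Z))%R by lia.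
have -> : (- t + a%:Z = - (t - a%:Z))%R by lia.
by rewrite !IH addnC.
Qed.

Definition c n v := cnt (nseq n 1%N) v.

Lemma cS n v : c n.+1 v = c n (v - 1)%R + c n (v + 1)%R.
Proof. by []. Qed.

Lemma c_sym n v : c n (- v)%R = c n v.
Proof. exact: cnt_sym. Qed.

Lemma c_big n v : (n%:Z < v)%R -> c n v = 0.
Proof.
elim: n v => [|n IH] v Hv; first by rewrite /c /=; case: eqP => //; lia.
by rewrite cS !IH //; lia.
Qed.

Lemma c_mono n v : (0 <= v)%R -> c n (v + 2)%R <= c n v.
Proof.
elim: n v => [|n IH] v Hv; first by rewrite /c /=; case: eqP => //; lia.
rewrite !cS.
have -> : (v + 2 - 1 = v + 1)%R by lia.
rewrite [X in _ <= X]addnC leq_add2l.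
have -> : (v + 2 + 1 = (v + 1) + 2)%R by lia.
case: (ltP 0%R v) => Hv0.
- apply: leq_trans (IH _ _) _; first by lia.
  have -> : (v + 1 = (v - 1) + 2)%R by lia.
  by apply: IH; lia.
- have -> : v = 0%R by lia.
  rewrite add0r -(c_sym n (-1)) opprK.
  have -> : (1 + 2 = 1 + 2)%R by [].
  by apply: IH.
Qed.

Lemma c_binom n j : c n (n%:Z - (2 * j)%:Z)%R = 'C(n, j).
Proof.
elim: n j => [|n IH] j.
  by case: j => [|j] //; rewrite /c /=; case: eqP => //; lia.
rewrite cS; case: j => [|j].
  rewrite bin0 (c_big (v := _ + 1)%R); last by lia.
  have -> : ((n.+1)%:Z - (2 * 0)%:Z - 1 = n%:Z - (2 * 0)%:Z)%R by lia.
  by rewrite IH bin0.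
have -> : ((n.+1)%:Z - (2 * j.+1)%:Z - 1 = n%:Z - (2 * j.+1)%:Z)%R by lia.
have -> : ((n.+1)%:Z - (2 * j.+1)%:Z + 1 = n%:Z - (2 * j)%:Z)%R by lia.
by rewrite !IH binS addnC.
Qed.

Lemma c_par m v : c (2 * m) (2 * v+1)%R = 0 /\ c (2 * m).+1 (2 * v)%R = 0.
Proof.
elim: m v => [|m IH] v.
  split; first by rewrite /c /=; case: eqP => //; lia.
  rewrite cS /c /=; (case: eqP; first lia); case: eqP => //; lia.
have E1 : forall u, c (2 * m.+1) (2 * u+1)%R = 0.
  move=> u; have -> : (2 * m.+1 = (2 * m).+2)%N by lia.
  rewrite cS.
  have -> : (2 * u + 1 - 1 = 2 * u)%R by lia.
  have -> : (2 * u + 1 + 1 = 2 * (u + 1))%R by lia.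
  by rewrite (proj2 (IH u)) (proj2 (IH (u+1)%R)).
split; first exact: E1.
rewrite cS.
have -> : (2 * v - 1 = 2 * (v - 1) + 1)%R by lia.
by rewrite !E1.
Qed.

Lemma cnt_nseq n m u : 0 < m -> cnt (nseq n m) (m%:Z * u)%R = c n u.
Proof.
move=> Hm; elim: n u => [|n IH] u.
  rewrite /c /=; congr nat_of_bool; apply/eqP/eqP => H; nia.
rewrite /= cS -!IH.
have -> : (m%:Z * u - m%:Z = m%:Z * (u - 1))%R by lia.
have -> : (m%:Z * u + m%:Z = m%:Z * (u + 1))%R by lia.
by [].
Qed.

Definition W s n := \sum_(i < s) (c n (- i%:Z)%R + c n (i%:Z + 1)%R).

Lemma WS s n : W s.+1 n = W s n + (c n (- s%:Z)%R + c n (s%:Z + 1)%R).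
Proof. by rewrite /W big_ord_recr. Qed.

Lemma W0 n : W 0 n = 0.
Proof. by rewrite /W big_ord0. Qed.

Definition d n (i : nat) := c n (- i%:Z)%R + c n (i%:Z + 1)%R.

Lemma d_step n i : d n i.+1 <= d n i.
Proof.
rewrite /d !c_sym.
have -> : ((i.+1)%:Z + 1 = i%:Z + 2)%R by lia.
have -> : ((i.+1)%:Z = i%:Z + 1)%R by lia.
by rewrite addnC leq_add2r; apply: c_mono; lia.
Qed.

Lemma d_anti n i j : i <= j -> d n j <= d n i.
Proof.
move=> /subnK <-; elim: (j - i) => [|k IH] //.
by rewrite addSn; apply: leq_trans (d_step _ _) IH.
Qed.

Lemma Wconc n x y j : y <= x -> j <= y -> W (x + j) n + W (y - j) n <= W x n + W y n.
Proof.
move=> Hyx; elim: j => [|j IH] Hj; first by rewrite addn0 subn0.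
apply: leq_trans (IH (ltnW Hj)).
have Ey : y - j = (y - j.+1).+1 by lia.
rewrite addnS Ey !WS -/(d n (x + j)) -/(d n (y - j.+1)).
rewrite -addnA leq_add2l addnC leq_add2l.
by apply: d_anti; lia.
Qed.

Lemma Wpascal n s : W s.+1 n.+1 = W s.+2 n + W s n.
Proof.
elim: s => [|s IH].
  rewrite W0 addn0 !WS !W0 !add0n !cS.
  have -> : (- (0%:Z) - 1 = - 1)%R by lia.
  have -> : (- (0%:Z) + 1 = 1)%R by lia.
  have -> : (0%:Z + 1 - 1 = 0)%R by lia.
  have -> : (0%:Z + 1 + 1 = 1%:Z + 1)%R by lia.
  have -> : (- (0%:Z) = 0)%R by lia.
  by rewrite addnACA [RHS]addnACA; congr (_ + _); exact: addnC.
rewrite WS IH [W s.+3 n]WS [W s.+1 n]WS !cS.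
have -> : (- ((s.+1)%:Z) - 1 = - ((s.+2)%:Z))%R by lia.
have -> : (- ((s.+1)%:Z) + 1 = - (s%:Z))%R by lia.
have -> : ((s.+1)%:Z + 1 - 1 = s%:Z + 1)%R by lia.
have -> : ((s.+1)%:Z + 1 + 1 = (s.+2)%:Z + 1)%R by lia.
lia.
Qed.

Lemma W_mono n s s' : s <= s' -> W s n <= W s' n.
Proof.
move=> /subnK <-; elim: (s' - s) => [|k IH] //.
by rewrite addSn WS; apply: leq_trans IH (leq_addr _ _).
Qed.

Lemma sum_count (T : eqType) (P : pred T) (s : seq T) :
  \sum_(t <- s) (P t : nat) = count P s.
Proof. by elim: s => [|x s IH]; rewrite ?big_nil ?big_cons ?IH. Qed.

Lemma sum_shift (T : seq int) (a : int) :
  (\sum_(t <- T) (t + a) = \sum_(t <- T) t + (size T)%:Z * a)%R.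
Proof.
elim: T => [|x T IH]; rewrite ?big_nil ?big_cons /=; first lia.
rewrite IH -!addrA; congr (_ + _)%R; rewrite addrCA; congr (_ + _)%R.
by rewrite -[in RHS]addn1 PoszD mulrDl mul1r addrC.
Qed.

Lemma main_bound w T : all (fun x => 0 < x) w -> uniq T ->
  \sum_(t <- T) cnt w t <= W (size T) (size w).
Proof.
elim: w T => [|a w IH] T /=.
  move=> _ HT; case: T HT => [|t0 T0] HT; first by rewrite big_nil.
  rewrite sum_count count_uniq_mem //.
  apply: leq_trans (leq_b1 _) _.
  apply: leq_trans (W_mono _ (_ : 1 <= (size T0).+1)) => //.
  by rewrite WS W0.
move=> /andP[Ha Hw] HT.
case: T HT => [|t0 T0] HT; first by rewrite big_nil.
set T := t0 :: T0 in HT *.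
set s := size T.
pose U := [seq (t - a%:Z)%R | t <- T].
pose V := [seq (t + a%:Z)%R | t <- T].
have HU : uniq U by rewrite map_inj_uniq; [exact: HT | exact: addIr].
have HV : uniq V by rewrite map_inj_uniq; [exact: HT | exact: addIr].
have -> : \sum_(t <- T) cnt (a :: w) t =
   \sum_(u <- U) cnt w u + \sum_(v <- V) cnt w v by rewrite big_split !big_map.
have -> : \sum_(v <- V) cnt w v = \sum_(v <- [seq v <- V | v \in U]) cnt w v + \sum_(v <- [seq v <- V | v \notin U]) cnt w v.
  by rewrite !big_filter [LHS](bigID (fun v => v \in U)).
rewrite addnCA addnC -big_cat.
set q := count (fun v => v \in U) V.
have Hq : q < s.
  have Hqs : q <= s by rewrite /q /s -(size_map (fun t => (t + a%:Z)%R) T) count_size.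
  rewrite ltn_neqAle Hqs andbT.
  apply/negP => /eqP Hc.
  have sub : {subset V <= U}.
    by apply/allP; rewrite all_count size_map; apply/eqP; exact: Hc.
  have HVU : V =i U by apply: (uniq_min_size HV sub _).2; rewrite !size_map.
  have HP := uniq_perm HV HU HVU.
  have := @perm_big int +%R 0%R _ V U xpredT (fun x : int => x) HP.
  rewrite !big_map.
  have -> : (\sum_(i <- T) (i - a%:Z) = \sum_(i <- T) (i + (- a%:Z)))%R by [].
  rewrite !sum_shift /s /=; lia.
apply: leq_trans (leq_add (IH _ Hw _) (IH _ Hw _)) _.
- rewrite cat_uniq HU filter_uniq // andbT.
  by apply/hasPn => v; rewrite mem_filter => /andP[].
- exact: filter_uniq.
rewrite size_cat size_filter /U size_map -/s.
have Hs' : count (predC (fun v => v \in U)) V = s - q.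
  rewrite /q /s; move: (count_predC (fun v => v \in U) V); rewrite size_map. by move=> <-; rewrite addKn.
rewrite Hs' size_filter -/q.
case Es : s Hq => [|s1] // Hq1.
rewrite Wpascal.
have E1 : s1.+1 + (s1.+1 - q) = s1.+2 + (s1 - q) by lia.
have E2 : q = s1 - (s1 - q) by lia.
rewrite E1 [in W q _]E2; apply: Wconc; lia.
Qed.

Definition top s (x : seq nat) := \sum_(c <- take s (sort geq x)) c.

Lemma sumtake_mono n n' (l : seq nat) : n <= n' ->
  \sum_(c <- take n l) c <= \sum_(c <- take n' l) c.
Proof.
move=> /subnK <-; rewrite addnC takeD big_cat /=; exact: leq_addr.
Qed.

Lemma sumtake_le n (l : seq nat) : \sum_(c <- take n l) c <= \sum_(c <- l) c.
Proof.
by rewrite -{2}(cat_take_drop n l) big_cat /= leq_addr.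
Qed.

Lemma top_mono s s' x : s <= s' -> top s x <= top s' x.
Proof. exact: sumtake_mono. Qed.

Lemma take_ins a (q : seq nat) m : all (fun y => y <= a) q ->
  \sum_(c <- take m.+1 q) c <= a + \sum_(c <- take m q) c.
Proof.
elim: q m => [|b q IH] m /=; first by rewrite !big_nil.
move=> /andP[Hb Hq]; case: m => [|m] /=.
  by rewrite take0 big_cons !big_nil !addn0.
rewrite !big_cons addnCA leq_add2l; exact: IH.
Qed.

Section Ins.
Variables (a : nat) (x : seq nat).
Let r := sort geq x.
Let p := [seq y <- r | a <= y].
Let q := [seq y <- r | predC (fun y => a <= y) y].

Lemma geq_tr : transitive geq.
Proof. by move=> u v w /= H1 H2; apply: leq_trans H2 H1. Qed.

Lemma geq_as : antisymmetric geq.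
Proof. by move=> u v /= H; apply/eqP; rewrite eqn_leq andbC. Qed.

Lemma r_sorted : sorted geq r.
Proof. apply: sort_sorted => u v /=; exact: leq_total. Qed.

Lemma allrel_pq b : b \in p -> forall y, y \in q -> y <= b.
Proof.
move=> Hb y Hy; move: Hb Hy; rewrite !mem_filter => /andP[Hb _] /andP[Hy _].
move: Hy Hb => /=; lia.
Qed.

Lemma r_eq : r = p ++ q.
Proof.
apply: (sorted_eq geq_tr geq_as r_sorted).
  rewrite (sorted_pairwise geq_tr) pairwise_cat -!(sorted_pairwise geq_tr).
  rewrite !sorted_filter ?andbT; try exact: geq_tr; try exact: r_sorted.
  by apply/allrelP => u v Hu Hv /=; apply: allrel_pq.
by rewrite perm_sym perm_filterC.
Qed.

Lemma ins_eq : sort geq (a :: x) = p ++ a :: q.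
Proof.
apply: (sorted_eq geq_tr geq_as).
- apply: sort_sorted => u v /=; exact: leq_total.
- rewrite (sorted_pairwise geq_tr) pairwise_cat pairwise_cons.
  rewrite -!(sorted_pairwise geq_tr) !sorted_filter; try exact: geq_tr; try exact: r_sorted.
  rewrite !andbT; apply/and3P; split.
  + apply/allrelP => u v Hu; rewrite inE => /orP[/eqP ->|Hv] /=.
      by move: Hu; rewrite mem_filter => /andP[].
    exact: allrel_pq.
  + by [].
  + by apply/allP => v; rewrite mem_filter /= => /andP[H _]; lia.
- rewrite perm_sort perm_sym (perm_catCA p [:: a] q) /= perm_cons.
  by rewrite -r_eq perm_sort.
Qed.

Lemma q_le : all (fun y => y <= a) q.
Proof. by apply/allP => v; rewrite mem_filter /= => /andP[H _]; lia. Qed.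

Lemma p_ge : all (fun y => a <= y) p.
Proof. by apply/allP => v; rewrite mem_filter => /andP[]. Qed.

Lemma top_cons1 s : top s x <= top s (a :: x).
Proof.
rewrite /top ins_eq -/r r_eq !take_cat.
case: ltnP => Hs //.
rewrite !big_cat leq_add2l.
case E : (s - size p) => [|m] /=; first by rewrite take0 big_nil.
rewrite big_cons; exact: take_ins q_le.
Qed.

Lemma top_cons2 s : a + top s x <= top s.+1 (a :: x).
Proof.
rewrite /top ins_eq -/r r_eq !take_cat.
case: (ltnP s (size p)) => Hs.
- case: (ltnP s.+1 (size p)) => Hs1.
  + rewrite (take_nth 0 Hs) -cats1 big_cat big_seq1 addnC leq_add2l.
    by move/allP: p_ge; apply; rewrite mem_nth.
  + have Es : size p = s.+1 by lia.
    have -> : s.+1 - size p = 0 by lia.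
    rewrite take0 cats0.
    rewrite [in X in _ <= X](_ : p = take s.+1 p); last by rewrite -Es take_size.
    rewrite (take_nth 0 Hs) -cats1 big_cat big_seq1 addnC leq_add2l.
    by move/allP: p_ge; apply; rewrite mem_nth.
- have -> : s.+1 < size p = false by lia.
  have -> : s.+1 - size p = (s - size p).+1 by lia.
  by rewrite /= !big_cat big_cons /= addnCA.
Qed.

End Ins.

Lemma mask_le_top (m : bitseq) (x : seq nat) :
  \sum_(c <- mask m x) c <= top (size (mask m x)) x.
Proof.
elim: x m => [|a x IH] [|b m] //=.
- by rewrite big_nil.
case: b => /=.
  rewrite big_cons; apply: leq_trans (top_cons2 a x _).
  by rewrite leq_add2l.
by apply: leq_trans (IH m) (top_cons1 _ _ _).
Qed.

Lemma subseq_le_top (y x : seq nat) s : subseq y x -> size y <= s ->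
  \sum_(c <- y) c <= top s x.
Proof.
move=> /subseqP [m _ ->] Hs.
by apply: leq_trans (mask_le_top m x) (top_mono _ Hs).
Qed.

Lemma W4E n : W 4 n = c n 0 + c n 1 + c n (-1) + c n 2 + c n (-2) + c n 3 + c n (-3) + c n 4.
Proof. by rewrite /W !big_ord_recr big_ord0 /= !addnA. Qed.

Lemma small0 : W 4 0 <= top4_binom_sum 0. Proof. rewrite W4E /top4_binom_sum unlock. by vm_compute. Qed.
Lemma small1 : W 4 1 <= top4_binom_sum 1. Proof. rewrite W4E /top4_binom_sum unlock. by vm_compute. Qed.
Lemma small2 : W 4 2 <= top4_binom_sum 2. Proof. rewrite W4E /top4_binom_sum unlock. by vm_compute. Qed.

Lemma cpar_odd {m v} u : v = (2 * u + 1)%R -> c (2 * m) v = 0.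
Proof. by move=> ->; exact: (c_par m u).1. Qed.

Lemma cpar_even {m v} u : v = (2 * u)%R -> c (2 * m).+1 v = 0.
Proof. by move=> ->; exact: (c_par m u).2. Qed.

Lemma cbin {n v} j : v = (n%:Z - (2 * j)%:Z)%R -> c n v = 'C(n, j).
Proof. by move=> ->; exact: c_binom. Qed.

Lemma iota_sub lo len N : lo + len <= N -> subseq (iota lo len) (iota 0 N).
Proof.
move=> H; rewrite (_ : N = lo + (len + (N - lo - len))); last by lia.
rewrite !iotaD add0n.
exact: subseq_trans (prefix_subseq _ _) (suffix_subseq _ _).
Qed.

Lemma W4_le_top n : W 4 n <= top4_binom_sum n.
Proof.
case: n => [|n]; first exact: small0.
case: n => [|n]; first exact: small1.
case: n => [|n]; first exact: small2.
have [m' Hm] : exists m', n.+3 = 2 * (m'.+2) \/ n.+3 = (2 * m'.+1).+1.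
  have H := odd_double_half n; rewrite -addnn in H.
  exists (half n); move: H; case: (odd n) => /= H; [left | right]; lia.
have Hsub : forall N lo, lo + 4 <= N.+1 -> \sum_(c <- [seq 'C(N, j) | j <- iota lo 4]) c <= top4_binom_sum N.
  move=> N lo H; apply: subseq_le_top; last by rewrite size_map size_iota.
  by apply: map_subseq; apply: iota_sub.
case: Hm => ->.
- apply: leq_trans (Hsub _ m' _); last by lia.
  rewrite W4E (cpar_odd (v := 1%R) (u := 0%R)) ?(cpar_odd (v := (-1)%R) (u := (-1)%R)) ?(cpar_odd (v := 3%R) (u := 1%R)) ?(cpar_odd (v := (-3)%R) (u := (-2)%R));
    try lia.
  rewrite (cbin (v := 0%R) (j := m'.+2)) ?(cbin (v := 2%R) (j := m'.+1)) ?(cbin (v := (-2)%R) (j := m'.+3)) ?(cbin (v := 4%R) (j := m')); try lia.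
  rewrite /= !big_cons big_nil; lia.
- apply: leq_trans (Hsub _ m' _); last by lia.
  rewrite W4E (cpar_even (v := 0%R) (u := 0%R)) ?(cpar_even (v := 2%R) (u := 1%R)) ?(cpar_even (v := (-2)%R) (u := (-1)%R)) ?(cpar_even (v := 4%R) (u := 2%R));
    try lia.
  rewrite (cbin (v := 1%R) (j := m'.+1)) ?(cbin (v := (-1)%R) (j := m'.+2)) ?(cbin (v := 3%R) (j := m')) ?(cbin (v := (-3)%R) (j := m'.+3)); try lia.
  rewrite /= !big_cons big_nil; lia.
Qed.

Lemma cS2 {n v v1 v2} : v1 = (v - 1)%R -> v2 = (v + 1)%R -> c n.+1 v = c n v1 + c n v2.
Proof. by move=> -> ->. Qed.

Lemma csym2 {n v w} : w = (- v)%R -> c n w = c n v.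
Proof. by move=> ->; exact: c_sym. Qed.

Lemma c_strict m : c (2 * m) 2 < c (2 * m) 0.
Proof.
elim: m => [|m IH]; first by [].
have -> : 2 * m.+1 = (2 * m).+2 by lia.
rewrite (cS2 (v1 := 1%R) (v2 := 3%R)); try lia.
rewrite (cS2 (v := 0%R) (v1 := (-1)%R) (v2 := 1%R)); try lia.
rewrite (cS2 (v := 1%R) (v1 := 0%R) (v2 := 2%R)); try lia.
rewrite (cS2 (v := 3%R) (v1 := 2%R) (v2 := 4%R)); try lia.
rewrite (cS2 (v := (-1)%R) (v1 := (-2)%R) (v2 := 0%R)); try lia.
rewrite (csym2 (v := 2%R) (w := (-2)%R)); last by lia.
have := c_mono (2 * m) (v := 2%R) isT.
rewrite (_ : (2 + 2 = 4)%R) // => H4.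
have H : forall a0 a2 a4 : nat, a4 <= a2 -> a2 < a0 -> a0 + a2 + (a2 + a4) < a2 + a0 + (a0 + a2) by lia.
exact: H H4 IH.
Qed.

Lemma Wa m : W 4 (2 * m) < c (2 * m).+2 0.
Proof.
rewrite W4E (cpar_odd (v := 1%R) (u := 0%R)) ?(cpar_odd (v := (-1)%R) (u := (-1)%R)) ?(cpar_odd (v := 3%R) (u := 1%R)) ?(cpar_odd (v := (-3)%R) (u := (-2)%R)); try lia.
rewrite (cS2 (v := 0%R) (v1 := (-1)%R) (v2 := 1%R)); try lia.
rewrite (cS2 (v := 1%R) (v1 := 0%R) (v2 := 2%R)); try lia.
rewrite (cS2 (v := (-1)%R) (v1 := (-2)%R) (v2 := 0%R)); try lia.
rewrite (csym2 (v := 2%R) (w := (-2)%R)); last by lia.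
have := c_mono (2 * m) (v := 2%R) isT.
rewrite (_ : (2 + 2 = 4)%R) // => H4.
move: (c_strict m).
have H : forall a0 a2 a4 : nat, a4 <= a2 -> a2 < a0 -> a0 + 0 + 0 + a2 + a2 + 0 + 0 + a4 < a2 + a0 + (a0 + a2) by lia.
exact: H H4.
Qed.

Lemma cnt2 n : cnt (2 :: nseq n 1) 0 = c n (-2) + c n 2.
Proof. by []. Qed.

Lemma Wb m : W 4 (2 * m).+1 = cnt (2 :: nseq (2 * m).+2 1) 0.
Proof.
rewrite cnt2 W4E (cpar_even (v := 0%R) (u := 0%R)) ?(cpar_even (v := 2%R) (u := 1%R)) ?(cpar_even (v := (-2)%R) (u := (-1)%R)) ?(cpar_even (v := 4%R) (u := 2%R)); try lia.
rewrite (cS2 (v := 2%R) (v1 := 1%R) (v2 := 3%R)); try lia.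
rewrite (cS2 (v := (-2)%R) (v1 := (-3)%R) (v2 := (-1)%R)); try lia.
have H : forall a b x y : nat, 0 + a + b + 0 + 0 + x + y + 0 = y + b + (a + x) by lia.
exact: H.
Qed.

Lemma cnt_const k x : 0 < x -> odd k -> cnt (nseq k x) 0 = 0.
Proof.
move=> Hx Hk.
have := cnt_nseq k 0 Hx; rewrite mulr0 => ->.
have [j ->] : exists j, k = (2 * j).+1.
  exists (half k); have := odd_double_half k; rewrite Hk -addnn /=; lia.
by rewrite (cpar_even (v := 0%R) (u := 0%R)).
Qed.

Lemma nonconst_bound l : is_partition l -> 2 <= size l -> ~~ constant l ->
  cnt l 0 <= W 4 (size l - 2).
Proof.
case: l => [|a l'] //; case/lastP: l' => [|m b] //.
move=> /andP[Hs Hp] _ Hnc.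
have Hab : b < a.
  have Hall := order_path_min geq_tr Hs.
  have Hba : b <= a by move/allP: Hall; apply; rewrite mem_rcons inE eqxx.
  rewrite ltn_neqAle Hba andbT; apply/negP => /eqP Eba; move/negP: Hnc; apply => /=.
  move: Hs; rewrite (sorted_pairwise geq_tr) -cats1 -cat_cons pairwise_cat => /and3P[Hr _ _].
  apply/allP => x; rewrite mem_cat mem_seq1 => /orP[Hx|/eqP ->]; last by rewrite Eba /=.
  have Hxa : x <= a by move/allP: Hall; apply; rewrite mem_rcons inE Hx orbT.
  have Hxb : b <= x.
    by move/allrelP: Hr => /(_ x b); apply; rewrite ?inE ?Hx ?orbT.
  by rewrite /= eqn_leq Hxa -Eba Hxb.
case/andP: Hp => Ha Hbm.
have : all (fun x => 0 < x) (rcons m b) := Hbm.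
rewrite all_rcons => /andP[Hb Hm].
have E : cnt (a :: rcons m b) 0 =
    \sum_(t <- [:: (0 - a%:Z - b%:Z)%R; (0 - a%:Z + b%:Z)%R; (0 + a%:Z - b%:Z)%R; (0 + a%:Z + b%:Z)%R]) cnt m t.
  by rewrite /= !cnt_rcons !big_cons big_nil addn0 !addnA.
rewrite E; apply: leq_trans (@main_bound m _ Hm _) _.
  rewrite /= !inE !negb_or; lia.
by rewrite [size (_ :: _)]/= size_rcons subn2.
Qed.

Theorem mainTheorem6 :
  (forall (k : nat) (l : seq nat),
      2 <= k -> is_partition l -> size l = k -> ~~ constant l ->
      #|perpB l| <= top4_binom_sum (k - 2))
  /\
  (forall (k : nat) (mu : seq nat),
      2 <= k -> ~~ odd k -> is_partition mu -> size mu = k -> ~~ constant mu ->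
      #|perpB mu| < #|perpB (nseq k 1)|)
  /\
  (forall (k : nat) (mu : seq nat),
      5 <= k -> odd k -> is_partition mu -> size mu = k ->
      #|perpB mu| <= #|perpB (2 :: nseq (k - 1) 1)|).
Proof.
split; [|split].
- move=> k l Hk Hl Hsz Hnc; rewrite /perpB card_perp.
  apply: leq_trans (nonconst_bound Hl _ Hnc) _; first by rewrite Hsz.
  by rewrite Hsz; apply: W4_le_top.
- move=> k mu Hk Hodd Hmu Hsz Hnc; rewrite /perpB !card_perp.
  apply: leq_ltn_trans (nonconst_bound Hmu _ Hnc) _; first by rewrite Hsz.
  have [j Ej] : exists j, k = (2 * j).+2.
    exists (half k - 1); have := odd_double_half k; rewrite (negbTE Hodd) -addnn /=; lia.
  rewrite Hsz Ej (_ : (2 * j).+2 - 2 = 2 * j); last by lia.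
  exact: Wa.
- move=> k mu Hk Hodd Hmu Hsz; rewrite /perpB !card_perp.
  have [j Ej] : exists j, k = (2 * j).+3.
    exists (half k - 1); have := odd_double_half k; rewrite Hodd -addnn /=; lia.
  have -> : cnt (2 :: nseq (k - 1) 1) 0 = W 4 (2 * j).+1.
    by rewrite Wb Ej (_ : (2 * j).+3 - 1 = (2 * j).+2) //; lia.
  case/boolP: (constant mu) => Hc.
  + case: mu Hmu Hsz Hc => [|x s] Hmu Hsz; first by rewrite -Hsz in Hk.
    move=> Hc; have Es : s = nseq (size s) x by apply/all_pred1P.
    have Hx : 0 < x by move: Hmu => /andP[_ /= /andP[]].
    rewrite Es; change (x :: nseq (size s) x) with (nseq (size s).+1 x).
    rewrite cnt_const //.
    by rewrite -[(size s).+1]/(size (x :: s)) Hsz.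
  + apply: leq_trans (nonconst_bound Hmu _ Hc) _; first by rewrite Hsz; lia.
    by rewrite Hsz Ej (_ : (2 * j).+3 - 2 = (2 * j).+1) //; lia.
Qed.
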